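(* Let $p \in \mathbb{R}\setminus\{0\}$, $q \in \mathbb{R}$, and $\Delta = \frac{q^2}{4} - p$. Let $\mathcal{A}_{p,q} = \{A \in S(4,\mathbb{R}) : \operatorname{Pf}(A) = p,\ \operatorname{s}(A) = q\}$, viewed as the subset $\{(a,b,c,d,e,f) \in \mathbb{R}^6 : af - be + cd = p,\ a + f = q\}$ of $\mathbb{R}^6$. Then: (1) if $\Delta < 0$, $\mathcal{A}_{p,q}$ is homeomorphic to $(\mathbb{R}^2 \setminus \{(0,0)\}) \times \mathbb{R}^2$; (2) if $\Delta > 0$, $\mathcal{A}_{p,q}$ is homeomorphic to $\mathbb{S}^2 \times \mathbb{R}^2$.
   Context: $S(4,\mathbb{R})$ is the set of invertible skew-symmetric real $4\times 4$ matrices; such a matrix is identified with $(a,b,c,d,e,f)\in\mathbb{R}^6$ via $A = \begin{bmatrix} 0 & a & b & c \\ -a & 0 & d & e \\ -b & -d & 0 & f \\ -c & -e & -f & 0\end{bmatrix}$, and $\operatorname{Pf}(A) = af - be + cd$, $\operatorname{s}(A) = a + f$. *)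

(* Defs.v *)
From HB Require Import structures.
From mathcomp Require Import all_boot all_order all_algebra.
From mathcomp Require Import all_classical all_reals all_analysis.
Import numFieldNormedType.Exports.
Set Implicit Arguments. Unset Strict Implicit. Unset Printing Implicit Defensive.
Import Order.TTheory GRing.Theory Num.Theory.
Local Open Scope classical_set_scope.
Local Open Scope ring_scope.

Definition homeomorphic (T1 T2 : topologicalType) (A : set T1) (B : set T2) : Prop :=
  exists (f : T1 -> T2) (g : T2 -> T1),
    (forall x, A x -> B (f x)) /\
    (forall y, B y -> A (g y)) /\
    (forall x, A x -> g (f x) = x) /\
    (forall y, B y -> f (g y) = y) /\
    {within A, continuous f} /\
    {within B, continuous g}.

(* R^6 with coordinates (a,b,c,d,e,f) of the skew-symmetric 4x4 matrix. *)
Notation R6 R := (R * R * R * R * R * R)%type.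

Definition Pf6 (R : realType) (x : R6 R) : R :=
  let '(a, b, c, d, e, f) := x in a * f - b * e + c * d.

Definition s6 (R : realType) (x : R6 R) : R :=
  let '(a, b, c, d, e, f) := x in a + f.

Definition Apq (R : realType) (p q : R) : set (R6 R) :=
  [set x | Pf6 x = p /\ s6 x = q].

Definition punctured_plane_times_plane (R : realType) : set ((R * R) * (R * R)) :=
  [set x | x.1 <> (0, 0)].

Definition sphere2_times_plane (R : realType) : set ((R * R * R) * (R * R)) :=
  [set x | let '(u, v, w) := x.1 in u ^+ 2 + v ^+ 2 + w ^+ 2 = 1].

(* Main.v *)
Require Import Defs.
From HB Require Import structures.
From mathcomp Require Import all_boot all_order all_algebra.
From mathcomp Require Import all_classical all_reals all_analysis.
From mathcomp Require Import ring lra.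
Import numFieldNormedType.Exports.
Import Order.TTheory GRing.Theory Num.Theory.
Local Open Scope classical_set_scope.
Local Open Scope ring_scope.

Section H.
Context {R : realType}.
Lemma cpair (T U V : topologicalType) (f : T -> U) (g : T -> V) x :
  {for x, continuous f} -> {for x, continuous g} -> {for x, continuous (fun y => (f y, g y))}.
Proof. move=> hf hg; exact: cvg_pair. Qed.
Lemma cfst (T U V : topologicalType) (f : T -> U * V) x :
  {for x, continuous f} -> {for x, continuous (fun y => (f y).1)}.
Proof. move=> hf. apply: cvg_comp hf _. exact: cvg_fst. Qed.
Lemma csnd (T U V : topologicalType) (f : T -> U * V) x :
  {for x, continuous f} -> {for x, continuous (fun y => (f y).2)}.
Proof. move=> hf. apply: cvg_comp hf _. exact: cvg_snd. Qed.
Lemma cid (T : topologicalType) x : {for x, continuous (fun y : T => y)}.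
Proof. exact: cvg_id. Qed.
Lemma ccst (T U : topologicalType) (c : U) x : {for x, continuous (fun y : T => c)}.
Proof. exact: cvg_cst. Qed.
Lemma cadd (T : topologicalType) (f g : T -> R) x :
  {for x, continuous f} -> {for x, continuous g} -> {for x, continuous (fun y => f y + g y)}.
Proof. move=> hf hg; exact: cvgD. Qed.
Lemma copp (T : topologicalType) (f : T -> R) x :
  {for x, continuous f} -> {for x, continuous (fun y => - f y)}.
Proof. move=> hf; exact: cvgN. Qed.
Lemma cmul (T : topologicalType) (f g : T -> R) x :
  {for x, continuous f} -> {for x, continuous g} -> {for x, continuous (fun y => f y * g y)}.
Proof. move=> hf hg; exact: cvgM. Qed.
Lemma cinv (T : topologicalType) (f : T -> R) x : f x != 0 ->
  {for x, continuous f} -> {for x, continuous (fun y => (f y)^-1)}.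
Proof. move=> h hf; exact: cvgV. Qed.
Lemma csqrt (T : topologicalType) (f : T -> R) x :
  {for x, continuous f} -> {for x, continuous (fun y => Num.sqrt (f y))}.
Proof. move=> hf. exact: (continuous_comp hf (@sqrt_continuous R (f x))). Qed.
Lemma cexp2 (T : topologicalType) (f : T -> R) x :
  {for x, continuous f} -> {for x, continuous (fun y => f y ^+ 2)}.
Proof. move=> hf. have -> : (fun y => f y ^+ 2) = (fun y => f y * f y) by apply: funext => y; rewrite expr2. exact: cmul. Qed.
Lemma cfst0 (U V : topologicalType) (x : U * V) : {for x, continuous fst}.
Proof. exact: cvg_fst. Qed.
Lemma csnd0 (U V : topologicalType) (x : U * V) : {for x, continuous snd}.
Proof. exact: cvg_snd. Qed.
Lemma c6 (T : topologicalType) (f1 f2 f3 f4 f5 f6 : T -> R) x :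
  {for x, continuous f1} -> {for x, continuous f2} -> {for x, continuous f3} ->
  {for x, continuous f4} -> {for x, continuous f5} -> {for x, continuous f6} ->
  {for x, continuous (fun y => (f1 y, f2 y, f3 y, f4 y, f5 y, f6 y) : R6 R)}.
Proof. move=> *. by repeat apply: cpair. Qed.
End H.

Ltac cont_f f :=
  lazymatch f with
  | (fun y => (_, _, _, _, _, _)) => eapply c6
  | fst => eapply cfst0
  | snd => eapply csnd0
  | (fun _ => ?c) => eapply ccst
  | (fun y => y) => eapply cid
  | (fun y => (_, _)) => eapply cpair
  | (fun y => _ + _) => eapply cadd
  | (fun y => - _) => eapply copp
  | (fun y => _ * _) => eapply cmul
  | (fun y => _ ^+ 2) => eapply cexp2
  | (fun y => Num.sqrt _) => eapply csqrt
  | (fun y => _.1) => eapply cfst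
  | (fun y => _.2) => eapply csnd
  | (fun y => _ ^-1) => eapply cinv
  end.
Ltac cont1 :=
  lazymatch goal with
  | |- {for _, continuous ?f} => cont_f f
  | |- continuous_at _ ?f => cont_f f
  end.
Ltac cont := repeat cont1.

Section P.
Variable R : realType.
Implicit Types x : R6 R.
Definition xa x := x.1.1.1.1.1.
Definition xb x := x.1.1.1.1.2.
Definition xc x := x.1.1.1.2.
Definition xd x := x.1.1.2.
Definition xe x := x.1.2.
Definition xf x := x.2.
Definition tt_ x := (xa x - xf x) / 2.
Definition uu x := (xb x + xe x) / 2.
Definition vv x := (xb x - xe x) / 2.
Definition ww x := (xc x + xd x) / 2.
Definition zz x := (xc x - xd x) / 2.
Definition back (q T U V W Z : R) : R6 R :=
  (q / 2 + T, U + V, W + Z, W - Z, U - V, q / 2 - T).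

Variables (D q : R).

Lemma Pf_back T U V W Z :
  Pf6 (back q T U V W Z) = q ^+ 2 / 4 - (T ^+ 2 + U ^+ 2 + Z ^+ 2) + V ^+ 2 + W ^+ 2.
Proof. rewrite /back /=. by field. Qed.
Lemma s_back T U V W Z : s6 (back q T U V W Z) = q.
Proof. rewrite /back /=. by field. Qed.
Lemma A_back x : s6 x = q -> x = back q (tt_ x) (uu x) (vv x) (ww x) (zz x).
Proof.
case: x => [[[[[a b] c] d] e] f] /= <-.
rewrite /back /tt_ /uu /vv /ww /zz /xa /xb /xc /xd /xe /xf /=.
congr (_, _, _, _, _, _); by field.
Qed.
Lemma A_quad p x : Pf6 x = p -> s6 x = q ->
  tt_ x ^+ 2 + uu x ^+ 2 + zz x ^+ 2 - vv x ^+ 2 - ww x ^+ 2 = q ^+ 2 / 4 - p.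
Proof.
case: x => [[[[[a b] c] d] e] f] /= <- <-.
rewrite /tt_ /uu /vv /ww /zz /xa /xb /xc /xd /xe /xf /=. by field.
Qed.
Lemma coords_back T U V W Z :
  [/\ tt_ (back q T U V W Z) = T, uu (back q T U V W Z) = U,
      vv (back q T U V W Z) = V, ww (back q T U V W Z) = W &
      zz (back q T U V W Z) = Z].
Proof.
rewrite /back /tt_ /uu /vv /ww /zz /xa /xb /xc /xd /xe /xf /=.
split; by field.
Qed.

Lemma tt_back T U V W Z : tt_ (back q T U V W Z) = T.
Proof. by have [] := coords_back T U V W Z. Qed.
Lemma uu_back T U V W Z : uu (back q T U V W Z) = U.
Proof. by have [] := coords_back T U V W Z. Qed.
Lemma vv_back T U V W Z : vv (back q T U V W Z) = V.
Proof. by have [] := coords_back T U V W Z. Qed.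
Lemma ww_back T U V W Z : ww (back q T U V W Z) = W.
Proof. by have [] := coords_back T U V W Z. Qed.
Lemma zz_back T U V W Z : zz (back q T U V W Z) = Z.
Proof. by have [] := coords_back T U V W Z. Qed.
Definition L1 x := Num.sqrt (D + vv x ^+ 2 + ww x ^+ 2).
Definition F1 x : (R * R * R) * (R * R) :=
  ((tt_ x / L1 x, uu x / L1 x, zz x / L1 x), (vv x, ww x)).
Definition G1 (y : (R * R * R) * (R * R)) : R6 R :=
  back q (Num.sqrt (D + y.2.1 ^+ 2 + y.2.2 ^+ 2) * y.1.1.1)
         (Num.sqrt (D + y.2.1 ^+ 2 + y.2.2 ^+ 2) * y.1.1.2) y.2.1 y.2.2
         (Num.sqrt (D + y.2.1 ^+ 2 + y.2.2 ^+ 2) * y.1.2).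

Lemma sq_gt0 (a b : R) : 0 < D -> 0 < Num.sqrt (D + a ^+ 2 + b ^+ 2).
Proof. move=> hD; rewrite sqrtr_gt0; nra. Qed.

Lemma posD (p : R) : D = q ^+ 2 / 4 - p -> 0 < D ->
  homeomorphic (Apq p q) (@sphere2_times_plane R).
Proof.
move=> eD hD.
exists F1, G1; split; [|split; [|split; [|split; [|split]]]].
- move=> x [hP hs]. rewrite /sphere2_times_plane /F1 /=.
  have hq := A_quad p x hP hs. rewrite -eD in hq.
  have hL := sq_gt0 (vv x) (ww x) hD.
  have hL2 : L1 x ^+ 2 = D + vv x ^+ 2 + ww x ^+ 2.
    by rewrite /L1 sqr_sqrtr //; apply: ltW; rewrite -sqrtr_gt0.
  have e : tt_ x ^+ 2 + uu x ^+ 2 + zz x ^+ 2 = L1 x ^+ 2 by rewrite hL2; lra.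
  have hL0 : L1 x != 0 by rewrite gt_eqF.
  move: (tt_ x) (uu x) (zz x) (L1 x) hL0 e => t u z L hL0 e.
  by rewrite !expr_div_n -!mulrDl e divff // expf_neq0.
- case=> [[[s1 s2] s3] [v w]] hs; rewrite /sphere2_times_plane /= in hs. change (Pf6 (G1 ((s1, s2, s3), (v, w))) = p /\ s6 (G1 ((s1, s2, s3), (v, w))) = q).
  rewrite /G1 s_back Pf_back /=; split => //.
  set L := Num.sqrt _.
  have hL2 : L ^+ 2 = D + v ^+ 2 + w ^+ 2.
    by rewrite /L sqr_sqrtr //; apply: ltW; rewrite -sqrtr_gt0 sq_gt0.
  have -> : (L * s1) ^+ 2 + (L * s2) ^+ 2 + (L * s3) ^+ 2 = L ^+ 2 * (s1 ^+ 2 + s2 ^+ 2 + s3 ^+ 2) by ring.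
  rewrite hs mulr1 hL2. lra.
- move=> x [hP hs]. rewrite /G1 /F1 /=. rewrite -/(L1 x).
  have hL := sq_gt0 (vv x) (ww x) hD.
  have hL0 : L1 x != 0 by rewrite gt_eqF.
  rewrite !(mulrC (L1 x)) !divfK //. by rewrite -A_back.
- case=> [[[s1 s2] s3] [v w]] hs; rewrite /sphere2_times_plane /= in hs.
  rewrite /F1 /L1 /G1 tt_back uu_back vv_back ww_back zz_back /=.
  have hL := sq_gt0 v w hD.
  have hL0 : Num.sqrt (D + v ^+ 2 + w ^+ 2) != 0 by rewrite gt_eqF.
  by rewrite !(mulrC (Num.sqrt _)) !mulfK.
- apply: continuous_subspaceT => x.
  rewrite /F1 /L1 /tt_ /uu /vv /ww /zz /xa /xb /xc /xd /xe /xf.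
  cont; rewrite gt_eqF //; exact: sq_gt0.
- apply: continuous_subspaceT => x. rewrite /G1 /back. cont.
Qed.

Definition r2 x := Num.sqrt (tt_ x ^+ 2 + uu x ^+ 2 + zz x ^+ 2 - D).
Definition F2 x : (R * R) * (R * R) :=
  ((vv x * ((tt_ x + r2 x) / r2 x), ww x * ((tt_ x + r2 x) / r2 x)), (uu x, zz x)).
Definition G2 (y : (R * R) * (R * R)) : R6 R :=
  back q ((y.1.1 ^+ 2 + y.1.2 ^+ 2 - (y.2.1 ^+ 2 + y.2.2 ^+ 2 - D))
            / (2 * Num.sqrt (y.1.1 ^+ 2 + y.1.2 ^+ 2)))
    y.2.1
    (y.1.1 * ((y.1.1 ^+ 2 + y.1.2 ^+ 2 + (y.2.1 ^+ 2 + y.2.2 ^+ 2 - D))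
            / (2 * (y.1.1 ^+ 2 + y.1.2 ^+ 2))))
    (y.1.2 * ((y.1.1 ^+ 2 + y.1.2 ^+ 2 + (y.2.1 ^+ 2 + y.2.2 ^+ 2 - D))
            / (2 * (y.1.1 ^+ 2 + y.1.2 ^+ 2))))
    y.2.2.

Lemma pair_ne0 (P1 P2 : R) : (P1, P2) <> (0, 0) -> 0 < P1 ^+ 2 + P2 ^+ 2.
Proof.
move=> h. have [e1|h1] := eqVneq P1 0.
  have [e2|h2] := eqVneq P2 0; first by exfalso; apply: h; rewrite e1 e2.
  have : 0 < P2 ^+ 2 by rewrite lt_def sqrf_eq0 h2 sqr_ge0.
  have := sqr_ge0 P1. lra.
have : 0 < P1 ^+ 2 by rewrite lt_def sqrf_eq0 h1 sqr_ge0.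
have := sqr_ge0 P2. lra.
Qed.

Lemma G2_core (P1 P2 Q1 Q2 : R) : D < 0 -> 0 < P1 ^+ 2 + P2 ^+ 2 ->
  let S2 := P1 ^+ 2 + P2 ^+ 2 in let m := Q1 ^+ 2 + Q2 ^+ 2 - D in
  let s := Num.sqrt S2 in
  let T := (S2 - m) / (2 * s) in let c := (S2 + m) / (2 * S2) in
  let R0 := (S2 + m) / (2 * s) in
  [/\ T ^+ 2 + Q1 ^+ 2 + Q2 ^+ 2 - D = R0 ^+ 2, (P1 * c) ^+ 2 + (P2 * c) ^+ 2 = R0 ^+ 2,
      0 < R0, T + R0 = s & 0 < s /\ s ^+ 2 = S2].
Proof.
move=> hD hS S2 m s T c R0.
have hs : 0 < s by rewrite sqrtr_gt0.
have hs2 : s ^+ 2 = S2 by rewrite sqr_sqrtr // ltW.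
have hm : 0 < m by rewrite /m; have := sqr_ge0 Q1; have := sqr_ge0 Q2; lra.
have hs0 : s != 0 by rewrite gt_eqF.
have hR0 : 0 < R0 by rewrite /R0 divr_gt0 // ?mulr_gt0 // addr_gt0.
split => //.
- have -> : T ^+ 2 + Q1 ^+ 2 + Q2 ^+ 2 - D = T ^+ 2 + m by rewrite /m; ring.
  by rewrite /T /R0 -hs2; field.
- have -> : (P1 * c) ^+ 2 + (P2 * c) ^+ 2 = S2 * c ^+ 2 by rewrite /S2; ring.
  have hS0 : s ^+ 2 != 0 by rewrite expf_neq0.
  by rewrite /c /R0 -hs2; field.
- by rewrite /T /R0 -hs2; field.
Qed.

Lemma G2_core2 (P1 P2 Q1 Q2 P : R) : D < 0 -> 0 < P1 ^+ 2 + P2 ^+ 2 ->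
  let S2 := P1 ^+ 2 + P2 ^+ 2 in let m := Q1 ^+ 2 + Q2 ^+ 2 - D in
  let s := Num.sqrt S2 in let c := (S2 + m) / (2 * S2) in
  let R0 := (S2 + m) / (2 * s) in
  P * c * (s / R0) = P.
Proof.
move=> hD hS S2 m s c R0.
have hs : 0 < s by rewrite sqrtr_gt0.
have hs2 : s ^+ 2 = S2 by rewrite sqr_sqrtr // ltW.
have hm : 0 < m by rewrite /m; have := sqr_ge0 Q1; have := sqr_ge0 Q2; lra.
have hs0 : s != 0 by rewrite gt_eqF.
have hsm : s ^+ 2 + m != 0 by rewrite gt_eqF // addr_gt0 // exprn_gt0.
by rewrite /c /R0 -hs2; field; rewrite hs0 hsm.
Qed.

Lemma F2_core (t u v w z : R) : D < 0 -> t ^+ 2 + u ^+ 2 + z ^+ 2 - v ^+ 2 - w ^+ 2 = D ->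
  let r := Num.sqrt (t ^+ 2 + u ^+ 2 + z ^+ 2 - D) in let k := (t + r) / r in
  let S2 := (v * k) ^+ 2 + (w * k) ^+ 2 in let m := u ^+ 2 + z ^+ 2 - D in
  [/\ 0 < r, 0 < t + r, r ^+ 2 = v ^+ 2 + w ^+ 2,
      (S2 - m) / (2 * Num.sqrt S2) = t &
      v * k * ((S2 + m) / (2 * S2)) = v /\ w * k * ((S2 + m) / (2 * S2)) = w].
Proof.
move=> hD hq r k S2 m.
have hX : 0 < t ^+ 2 + u ^+ 2 + z ^+ 2 - D.
  have := sqr_ge0 t; have := sqr_ge0 u; have := sqr_ge0 z; lra.
have hr : 0 < r by rewrite sqrtr_gt0.
have hr2 : r ^+ 2 = t ^+ 2 + u ^+ 2 + z ^+ 2 - D by rewrite sqr_sqrtr // ltW.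
have htr : 0 < t + r.
  have : 0 < u ^+ 2 + z ^+ 2 - D by have := sqr_ge0 u; have := sqr_ge0 z; lra.
  nra.
have hvw : r ^+ 2 = v ^+ 2 + w ^+ 2 by lra.
have hr0 : r != 0 by rewrite gt_eqF.
have htr0 : t + r != 0 by rewrite gt_eqF.
have hS2 : S2 = (t + r) ^+ 2.
  rewrite /S2 !exprMn -mulrDl -hvw /k. field; by rewrite ?hr0 ?htr0.
have hm : m = r ^+ 2 - t ^+ 2 by rewrite /m; lra.
split => //.
- rewrite hS2 sqrtr_sqr ger0_norm ?ltW // hm. field; by rewrite ?hr0 ?htr0.
- by split; rewrite /k hS2 hm; field; rewrite ?hr0 ?htr0.
Qed.

Lemma sq3_gt0 (a b c : R) : D < 0 -> 0 < Num.sqrt (a ^+ 2 + b ^+ 2 + c ^+ 2 - D).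
Proof.
move=> hD; rewrite sqrtr_gt0.
have := sqr_ge0 a; have := sqr_ge0 b; have := sqr_ge0 c; lra.
Qed.

Lemma negD (p : R) : D = q ^+ 2 / 4 - p -> D < 0 ->
  homeomorphic (Apq p q) (@punctured_plane_times_plane R).
Proof.
move=> eD hD.
exists F2, G2; split; [|split; [|split; [|split; [|split]]]].
- move=> x [hP hs]. rewrite /punctured_plane_times_plane /F2 /r2 /=.
  have hq := A_quad p x hP hs. rewrite -eD in hq.
  have [hr htr hvw _ _] := F2_core _ _ _ _ _ hD hq.
  move: hr htr hvw. set r := Num.sqrt _. move=> hr htr hvw.
  have hk : (tt_ x + r) / r != 0 by rewrite gt_eqF // divr_gt0.
  case=> /eqP h1 /eqP h2.
  move: h1 h2; rewrite [_ * ((_ + _) / _) == 0]mulf_eq0 [ww x * _ == 0]mulf_eq0 (negbTE hk) !orbF => /eqP h1 /eqP h2.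
  move: hvw; rewrite h1 h2 expr0n /= addr0 => /eqP; rewrite sqrf_eq0 => /eqP hr0.
  by move: hr; rewrite hr0 ltxx.
- case=> [[P1 P2] [Q1 Q2]] h; rewrite /punctured_plane_times_plane /= in h.
  have hS := pair_ne0 P1 P2 h.
  change (Pf6 (G2 ((P1, P2), (Q1, Q2))) = p /\ s6 (G2 ((P1, P2), (Q1, Q2))) = q).
  rewrite /G2 s_back Pf_back /=; split => //.
  have [ha hb _ _ _] := G2_core P1 P2 Q1 Q2 hD hS.
  lra.
- move=> x [hP hs]. rewrite [RHS](A_back x hs) /G2 /F2 /r2 /=.
  have hq := A_quad p x hP hs. rewrite -eD in hq.
  have [_ _ _ h1 [h2 h3]] := F2_core _ _ _ _ _ hD hq.
  by rewrite h1 h2 h3.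
- case=> [[P1 P2] [Q1 Q2]] h; rewrite /punctured_plane_times_plane /= in h.
  have hS := pair_ne0 P1 P2 h.
  rewrite /F2 /r2 /G2 tt_back uu_back vv_back ww_back zz_back /=.
  have [ha _ hR0 hTR _] := G2_core P1 P2 Q1 Q2 hD hS.
  rewrite ha sqrtr_sqr ger0_norm ?ltW // hTR.
  by rewrite !(G2_core2 _ _ _ _ _ hD hS).
- apply: continuous_subspaceT => x.
  rewrite /F2 /r2 /tt_ /uu /vv /ww /zz /xa /xb /xc /xd /xe /xf.
  cont; by rewrite gt_eqF // sq3_gt0.
- apply: continuous_in_subspaceT => -[[P1 P2] [Q1 Q2]]; rewrite inE => h.
  have hS := pair_ne0 P1 P2 h.
  rewrite /G2 /back. cont; by rewrite /= mulf_neq0 // gt_eqF // ?sqrtr_gt0.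
Qed.
End P.

Theorem theorem2p3 (R : realType) (p q : R) (hp : p != 0) :
  let Delta := q ^+ 2 / 4 - p in
  (Delta < 0 -> homeomorphic (Apq p q) (@punctured_plane_times_plane R)) /\
  (0 < Delta -> homeomorphic (Apq p q) (@sphere2_times_plane R)).
Proof.
move=> Delta; split => h.
- exact: (@negD R (q ^+ 2 / 4 - p) q p erefl h).
- exact: (@posD R (q ^+ 2 / 4 - p) q p erefl h).
Qed.
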